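(* Assume $q_*(y)>0$ if and only if $\mathrm{numK}(y)=0$. Let $T>0$. Then for every $t\in[0,T)$ and every $y\in\mathcal{Y}$, $$R^\gets_t(y):=\sum_{y'\neq y}R^\gets_t(y',y)=\sum_{y'\neq y}R^\to(y,y')\,\frac{q^\gets_t(y')}{q^\gets_t(y)}\;\le\;\frac{\mathrm{numK}(y)\cdot K}{e^{T-t}-1}.$$
   Context: Fix integers $K\ge2$, $d\ge1$ and $\mathcal{Y}=\{1,\dots,K\}^d$; the symbol $K$ is the mask token. For $y\in\mathcal{Y}$, $\mathrm{numK}(y)=\#\{i: y_i=K\}$. The masked forward process $(\mathbf{y}^\to_t)_{t\ge0}$ is the time-homogeneous continuous-time Markov chain on $\mathcal{Y}$ with $\mathbf{y}^\to_0\sim q_*$ and rate function $R^\to(y,y')$ (rate of jumping from $y'$ to $y$): $R^\to(y,y')=1$ if $y$ and $y'$ differ in exactly one coordinate $i$ and $y_i=K$; $R^\to(y,y)=-(d-\mathrm{numK}(y))$; $0$ otherwise. Its marginals are $q^\to_t$. For $T>0$ the reverse marginals are $q^\gets_t:=q^\to_{T-t}$, $t\in[0,T)$, and $R^\gets_t(y',y):=R^\to(y,y')q^\gets_t(y')/q^\gets_t(y)$ for $y'\neq y$ (under the hypothesis, $q^\to_s(y)>0$ for all $y$ and $s>0$). *)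

(* Defs.v *)
From HB Require Import structures.
From mathcomp Require Import all_boot all_order all_algebra.
From mathcomp Require Import all_classical all_reals all_analysis.
Set Implicit Arguments. Unset Strict Implicit. Unset Printing Implicit Defensive.
Import Order.TTheory GRing.Theory Num.Theory.
Local Open Scope ring_scope.
Local Open Scope classical_set_scope.
Import numFieldNormedType.Exports.

(* Tokens {1,...,K} are represented by 'I_K (token j+1 <-> ordinal j);
   the mask token K is the ordinal with value K.-1. *)
Definition is_mask (K : nat) (a : 'I_K) : bool := (a : nat) == K.-1.

Definition Yst (K d : nat) := {ffun 'I_d -> 'I_K}.

Definition numK (K d : nat) (y : Yst K d) : nat := #|[set i | is_mask (y i)]|.

(* Forward rate R^->(y, y') : rate of jumping from y' to y. *)
Definition Rfwd (R : realType) (K d : nat) (y y' : Yst K d) : R :=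
  if y == y' then - ((d - numK y)%:R)
  else if (#|[set i | y i != y' i]| == 1%N) &&
          [forall i, (y i != y' i) ==> is_mask (y i)]
       then 1 else 0.

(* q : [0,+oo) -> distributions on Y are the marginals of the forward CTMC
   started at q_star : they solve the Kolmogorov forward equation
   d/dt q_t(y) = sum_{y'} R^->(y,y') q_t(y') for t > 0, with q_t -> q_star
   as t -> 0+ and q_0 = q_star. *)
Definition forward_marginals (R : realType) (K d : nat)
  (q_star : Yst K d -> R) (q : R -> Yst K d -> R) : Prop :=
  (forall y, q 0 y = q_star y) /\
  (forall y, q x y @[x --> 0^'+] --> q_star y) /\
  (forall t : R, 0 < t -> forall y,
      is_derive t (1 : R) (fun s : R => q s y) (\sum_(y' : Yst K d) @Rfwd R K d y y' * q t y')).

Definition Rrev (R : realType) (K d : nat) (q : R -> Yst K d -> R) (T t : R)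
  (y' y : Yst K d) : R :=
  @Rfwd R K d y y' * q (T - t) y' / q (T - t) y.

(* Main.v *)
Require Import Defs.
From HB Require Import structures.
From mathcomp Require Import all_boot all_order all_algebra.
From mathcomp Require Import all_classical all_reals all_analysis.
From mathcomp Require Import ring lra zify.
Import numFieldNormedType.Exports.
Import Order.TTheory GRing.Theory Num.Theory.
Set Implicit Arguments. Unset Strict Implicit. Unset Printing Implicit Defensive.
Local Open Scope ring_scope.

Lemma card_cset (T : finType) (P : pred T) : #|[set i | P i]%classic| = #|[set i | P i]|.
Proof. apply: eq_card => i; rewrite inE; apply/idP/idP => [/set_mem //|H]; exact: mem_set. Qed.

Lemma numKE K d (y : Yst K d) : numK y = #|[set i | is_mask (y i)]|.
Proof. exact: card_cset. Qed.

Definition Nb (K d : nat) (y y' : Yst K d) : bool :=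
  [&& y != y', #|[set i | y i != y' i]| == 1%N &
      [forall i, (y i != y' i) ==> is_mask (y i)]].

Lemma RfwdE (R : realType) K d (y y' : Yst K d) :
  y != y' -> @Rfwd R K d y y' = (Nb y y')%:R.
Proof.
move=> ne; rewrite /Rfwd /Nb (negbTE ne) card_cset /=; by case: ifP.
Qed.

Lemma numK_le K d (y : Yst K d) : (numK y <= d)%N.
Proof. by rewrite /numK -[X in (_ <= X)%N](card_ord d) max_card. Qed.

Lemma numK_Nb K d (y y' : Yst K d) : Nb y y' -> numK y = (numK y').+1.
Proof.
case/and3P=> _ /cards1P [i0 Hi0] /forallP Hm.
have Hd i : (y i != y' i) = (i == i0).
  by have := f_equal (fun A : {set 'I_d} => i \in A) Hi0; rewrite /= !inE.
have m0 : is_mask (y i0) by have := Hm i0; rewrite Hd eqxx.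
have nm0 : ~~ is_mask (y' i0).
  apply/negP => m1; move: (Hd i0); rewrite eqxx => /negP; apply.
  by apply/eqP/val_inj; rewrite /= (eqP m0) (eqP m1).
rewrite !numKE.
have -> : [set i | is_mask (y i)] = i0 |: [set i | is_mask (y' i)].
  apply/setP => i; rewrite !inE.
  case: (eqVneq i i0) => [->|ne]; first by rewrite m0.
  by move: (Hd i); rewrite (negbTE ne) => /negbFE/eqP ->.
by rewrite cardsU1 inE nm0.
Qed.

Lemma sum_Rfwd_ne (R : realType) K d (y : Yst K d) (f : Yst K d -> R) :
  \sum_(y' | y' != y) @Rfwd R K d y y' * f y' = \sum_(y' | Nb y y') f y'.
Proof.
rewrite big_mkcond [RHS]big_mkcond; apply: eq_bigr => y' _.
case: (eqVneq y' y) => [->|ne] /=.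
  by rewrite /Nb eqxx.
rewrite RfwdE 1?eq_sym //; case: (Nb y y'); by rewrite ?mul1r ?mul0r.
Qed.

Lemma sum_Rfwd (R : realType) K d (y : Yst K d) (f : Yst K d -> R) :
  \sum_y' @Rfwd R K d y y' * f y' = - (d - numK y)%:R * f y + \sum_(y' | Nb y y') f y'.
Proof.
by rewrite (bigD1 y) //= sum_Rfwd_ne /Rfwd eqxx.
Qed.
Local Open Scope classical_set_scope.
Lemma ode_zero (R : realType) (h : R -> R) (c : R) : 0 <= c ->
  (forall s : R, 0 < s -> is_derive s (1:R) h (- c * h s)) ->
  h x @[x --> 0^'+] --> 0 ->
  forall s, 0 < s -> h s = 0.
Proof.
move=> c0 dh hlim s s0.
pose g := fun x : R => h x * h x.
have dg : forall x : R, 0 < x -> is_derive x (1:R) g (- (c * 2) * (h x * h x)).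
  move=> x x0; apply: is_derive_eq; first by apply: is_deriveM; apply: dh.
  rewrite /GRing.scale /= /g /=. ring.
have gle : forall a : R, 0 < a -> a < s -> g s <= g a.
  move=> a a0 as_.
  have [xi xiin E] : exists2 xi, xi \in `]a, s[%R & g s - g a = (- (c * 2) * (h xi * h xi)) * (s - a).
    apply: (MVT as_).
      move=> x; rewrite in_itv /= => /andP[ax _]; apply: dg; exact: lt_trans ax.
    apply: derivable_within_continuous => x; rewrite in_itv /= => /andP[ax _].
    have x0 : 0 < x by apply: lt_le_trans ax.
    exact: (@ex_derive _ _ _ _ _ _ _ (dg x x0)).
  rewrite -subr_le0 E mulNr mulNr oppr_le0; apply: mulr_ge0; last by rewrite subr_ge0 ltW.
  by apply: mulr_ge0; [apply: mulr_ge0 | rewrite -expr2 sqr_ge0].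
have glim : g x @[x --> 0^'+] --> 0.
  have := cvgM hlim hlim; rewrite mulr0; exact.
have gs0 : g s <= 0.
  rewrite leNgt; apply/negP => gpos.
  have : \forall x \near 0^'+, [/\ 0 < x, x < s & g x < g s].
    near=> x; split.
    - by near: x; exact: nbhs_right_gt.
    - by near: x; exact: nbhs_right_lt.
    - near: x. have := @cvgr_lt _ _ _ _ g 0 glim _ gpos. exact.
  move=> /filter_ex [a [a0 as_ gas]].
  by have := gle a a0 as_; rewrite leNgt gas.
have : g s == 0 by rewrite eq_le gs0 /g /= -expr2 sqr_ge0.
by rewrite /g /= mulf_eq0 orbb => /eqP.
Unshelve. all: by end_near. Qed.
Lemma isdM (R : realType) (f g : R -> R) (x df dg : R) :
  is_derive x (1:R) f df -> is_derive x (1:R) g dg ->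
  is_derive x (1:R) (fun s => f s * g s) (f x * dg + g x * df).
Proof. by move=> Hf Hg; have := is_deriveM Hf Hg. Qed.

Lemma isdB (R : realType) (f g : R -> R) (x df dg : R) :
  is_derive x (1:R) f df -> is_derive x (1:R) g dg ->
  is_derive x (1:R) (fun s => f s - g s) (df - dg).
Proof. by move=> Hf Hg; have := is_deriveB Hf Hg. Qed.

Lemma isdC (R : realType) (x k : R) : is_derive x (1:R) (fun _ => k) 0.
Proof. exact: is_derive_cst. Qed.

Lemma isd_sum (R : realType) (I : finType) (P : pred I) (f : I -> R -> R) (df : I -> R) (x : R) :
  (forall i, P i -> is_derive x (1:R) (f i) (df i)) ->
  is_derive x (1:R) (fun s => \sum_(i | P i) f i s) (\sum_(i | P i) df i).
Proof.
move=> H; rewrite unlock /=.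
elim: (index_enum I) => [|a r IH] /=; first exact: isdC.
case: ifP => Pa; last exact: IH.
have := is_deriveD (H a Pa) IH. by [].
Qed.

Lemma cvg_sum_at (R : realType) (I : finType) (P : pred I) (f : I -> R -> R) (l : I -> R) :
  (forall i, P i -> f i x @[x --> (0:R)^'+] --> l i) ->
  (\sum_(i | P i) f i x) @[x --> (0:R)^'+] --> \sum_(i | P i) l i.
Proof.
move=> H; rewrite unlock /=.
elim: (index_enum I) => [|a r IH] /=; first exact: cvg_cst.
case: ifP => Pa; last exact: IH.
exact: (cvgD (H a Pa) IH).
Qed.

Theorem lemma3 (R : realType) (K d : nat) (hK : (2 <= K)%N) (hd : (1 <= d)%N)
  (q_star : Yst K d -> R)
  (hq_nonneg : forall y, 0 <= q_star y)
  (hq_sum : \sum_(y : Yst K d) q_star y = 1)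
  (hq_supp : forall y, 0 < q_star y <-> numK y = 0%N)
  (q : R -> Yst K d -> R)
  (hq : forward_marginals q_star q)
  (T : R) (hT : 0 < T) (t : R) (ht0 : 0 <= t) (htT : t < T) (y : Yst K d) :
  \sum_(y' : Yst K d | y' != y) Rrev q T t y' y
    <= (numK y)%:R * K%:R / (expR (T - t) - 1).
Proof.
move: hq => [hq0 [hqlim hqder]].
pose U y s := \sum_(y' | Nb y y') q s y'.
pose H y s := (expR s - 1) * U y s - (numK y)%:R * q s y.
have dq : forall s : R, 0 < s -> forall y, is_derive s (1:R) (fun s => q s y)
    (- (d - numK y)%:R * q s y + U y s).
  by move=> s s0 y0; rewrite /U -sum_Rfwd; exact: hqder.
have cnat : forall y y' : Yst K d, Nb y y' ->
    (d - numK y')%:R = (d - numK y)%:R + 1 :> R /\ (numK y')%:R = (numK y)%:R - 1 :> R.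
  move=> y0 y' N; have E := numK_Nb N; have L := numK_le y0; rewrite E in L *.
  split; last by rewrite -natr1 addrK.
  have -> : (d - numK y' = (d - (numK y').+1).+1)%N by lia.
  by rewrite -natr1.
have Hder : forall y : Yst K d, (forall y', Nb y y' -> forall s, 0 < s -> H y' s = 0) ->
    forall s : R, 0 < s -> is_derive s (1:R) (H y) (- (d - numK y)%:R * H y s).
  move=> y0 Hy s s0.
  have dU : is_derive s (1:R) (U y0)
      (\sum_(y' | Nb y0 y') (- (d - numK y')%:R * q s y' + U y' s)).
    exact: (isd_sum (fun y' _ => dq s s0 y')).
  have dH := isdB (isdM (isdB (is_derive_expR s) (isdC s 1)) dU)
     (isdM (isdC s (numK y0)%:R) (dq s s0 y0)).
  apply: (is_derive_eq dH).
  have C1 : \sum_(y' | Nb y0 y') (- (d - numK y')%:R * q s y' + U y' s)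
      = - ((d - numK y0)%:R + 1) * U y0 s + \sum_(y' | Nb y0 y') U y' s.
    rewrite big_split /= /U mulr_sumr; congr (_ + _); apply: eq_bigr => y' N.
    by rewrite (cnat _ _ N).1.
  have C2 : (expR s - 1) * \sum_(y' | Nb y0 y') U y' s - ((numK y0)%:R - 1) * U y0 s = 0.
    have Z : \sum_(y' | Nb y0 y') H y' s = 0 by apply: big1 => y' N; exact: Hy.
    rewrite -[RHS]Z /H big_split /= -mulr_sumr.
    congr (_ + _); rewrite /U -mulNr mulr_sumr; apply: eq_bigr => y' N.
    by rewrite (cnat _ _ N).2 mulNr.
  rewrite C1 /H; apply/subr0_eq; rewrite -[RHS]C2.
  set e := expR s; set u := U y0 s; set S := \sum_(y' | Nb y0 y') U y' s; set qq := q s y0.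
  ring.
have mq0 : forall y0 : Yst K d, (numK y0)%:R * q_star y0 = 0.
  move=> y0; case E : (numK y0) => [|n]; first by rewrite mul0r.
  suff -> : q_star y0 = 0 by rewrite mulr0.
  apply/eqP; rewrite eq_le hq_nonneg andbT leNgt; apply/negP => /(hq_supp y0).
  by rewrite E.
have Hlim : forall y0 : Yst K d, H y0 x @[x --> (0:R)^'+] --> 0.
  move=> y0.
  have F0 : Filter (0:R)^'+ by exact: at_right_proper_filter.
  have e0 : (expR x - 1) @[x --> (0:R)^'+] --> 0.
    have := cvg_at_right_filter (@continuous_expR R 0); rewrite expR0 => h1.
    have := cvgB h1 (cvg_cst (1:R)); rewrite subrr; exact.
  have u0 := cvg_sum_at (P := Nb y0) (fun y' _ => hqlim y').
  have := cvgM e0 u0; rewrite mul0r => /(_ F0) p1.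
  have := @cvgMl_tmp _ _ _ _ (fun x => q x y0) ((numK y0)%:R) _ (hqlim y0) => /(_ F0) p2.
  have := cvgB p1 p2; rewrite mq0 subrr; exact.
have Hzero : forall n (y0 : Yst K d), numK y0 = n -> forall s : R, 0 < s -> H y0 s = 0.
  elim=> [|n IH] y0 Hn; apply: (ode_zero (c := (d - numK y0)%:R)) (Hlim y0) => //;
    apply: Hder => y' N.
  - by have := numK_Nb N; rewrite Hn.
  - by apply: IH; have := numK_Nb N; rewrite Hn => -[].
have s0 : 0 < T - t by rewrite subr_gt0.
have HZ := Hzero _ y erefl (T - t) s0.
rewrite /Rrev -mulr_suml sum_Rfwd_ne.
change (U y (T - t) / q (T - t) y <= (numK y)%:R * K%:R / (expR (T - t) - 1)).
move: HZ; rewrite /H.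
set e := expR (T - t); set u := U y (T - t); set qq := q (T - t) y; set m := (numK y)%:R.
move=> HZ.
have e1 : 0 < e - 1 by rewrite subr_gt0 expR_gt1.
have hu : u = m * qq / (e - 1).
  have : (e - 1) * u = m * qq by apply/subr0_eq.
  move=> <-; field; exact: lt0r_neq0.
have Kge1 : 1 <= K%:R :> R by rewrite ler1n; lia.
have m0 : 0 <= m by rewrite /m ler0n.
case qq0 : (qq == 0).
  rewrite (eqP qq0) invr0 mulr0; apply: divr_ge0; last exact: ltW.
  by apply: mulr_ge0 => //; rewrite ler0n.
have -> : u / qq = m / (e - 1).
  rewrite hu; field; apply/andP; split; [exact: lt0r_neq0 | by rewrite qq0].
rewrite mulrAC; apply: ler_peMr => //; apply: divr_ge0 => //; exact: ltW.
Qed.
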